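(* Consider a Markov decision process with finite state space $\mathcal{S}$ such that, for every allowed policy $\pi$, the induced Markov chain on $\mathcal{S}$ is ergodic and reversible with respect to its stationary distribution $\mathfrak{p}_\pi$. Let $\mathfrak{p}_{\min}=\min_{s\in\mathcal{S},\pi}\mathfrak{p}_\pi(s)$, and let $\lambda_\star<1$ be an upper bound, valid for every allowed policy $\pi$, on the second largest eigenvalue of the one-step transition matrix $P_\pi=[\mathbb{P}(s_{t+1}=j\mid s_t=i,\pi)]_{ij}$. Let $\epsilon>0$ and $\gamma\in(0,1)$. If \[ \gamma\ \ge\ \frac{1-\mathfrak{p}_{\min}\,\epsilon}{1-\lambda_\star\,\mathfrak{p}_{\min}\,\epsilon}, \] then $\|\Delta_{z,z'}\|_{\mathrm{TV}}\le\epsilon$ for all $z,z'\in\mathcal{S}$ and every allowed policy $\pi$.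
   Context: For a policy $\pi$ and discount factor $\gamma$, the discounted state occupation measure from $z$ is $\rho_z(s)=(1-\gamma)\sum_{t\ge0}\gamma^t\,\mathbb{P}(s_t=s\mid s_0=z,\pi)$, and $\Delta_{z,z'}=\rho_z-\rho_{z'}$ with total variation norm $\|\Delta_{z,z'}\|_{\mathrm{TV}}=\tfrac12\sum_{s\in\mathcal{S}}|\Delta_{z,z'}(s)|$. Reversibility means $\mathfrak{p}_\pi(z)\,\mathbb{P}(s_{1}=z'\mid s_0=z,\pi)=\mathfrak{p}_\pi(z')\,\mathbb{P}(s_{1}=z\mid s_0=z',\pi)$ for all $z,z'$. The ''second largest eigenvalue'' means the largest eigenvalue of $P_\pi$ other than the eigenvalue $1$ (counted once); all eigenvalues of $P_\pi$ are real by reversibility. *)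

(* Defs.v *)
From HB Require Import structures.
From mathcomp Require Import all_boot all_order all_algebra.
From mathcomp Require Import all_classical all_reals all_analysis.
Set Implicit Arguments. Unset Strict Implicit. Unset Printing Implicit Defensive.
Import Order.TTheory GRing.Theory Num.Theory.
Local Open Scope ring_scope.

Section MDP.
Variables (R : realType) (n m : nat).
(* K a : 'M_n is the transition matrix under action a:
   K a i j = P(s_{t+1} = j | s_t = i, a_t = a).
   A (stationary, Markov) policy pi : 'M_(n,m), pi i a = P(a_t = a | s_t = i). *)

Definition stochastic_mx (p q : nat) (M : 'M[R]_(p, q)) : Prop :=
  (forall i j, 0 <= M i j) /\ (forall i, \sum_j M i j = 1).

Definition mdp_kernel (K : 'I_m -> 'M[R]_n) : Prop :=
  forall a, stochastic_mx (K a).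

Definition induced_chain (K : 'I_m -> 'M[R]_n) (pi : 'M[R]_(n, m)) : 'M[R]_n :=
  \matrix_(i, j) \sum_a pi i a * K a i j.

Definition irreducible_mx (P : 'M[R]_n) : Prop :=
  forall i j, exists t : nat, 0 < (P ^+ t) i j.

Definition aperiodic_mx (P : 'M[R]_n) : Prop :=
  forall i (d : nat),
    (forall t : nat, (0 < t)%N -> 0 < (P ^+ t) i i -> (d %| t)%N) -> d = 1%N.

Definition ergodic_mx (P : 'M[R]_n) : Prop :=
  irreducible_mx P /\ aperiodic_mx P.

Definition stationary_distr (P : 'M[R]_n) (p : 'rV[R]_n) : Prop :=
  (forall s, 0 <= p 0 s) /\ \sum_s p 0 s = 1 /\ p *m P = p.

Definition reversible_wrt (P : 'M[R]_n) (p : 'rV[R]_n) : Prop :=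
  forall z z', p 0 z * P z z' = p 0 z' * P z' z.

(* lam is an upper bound on the second largest eigenvalue of P:
   listing the (real, by reversibility) eigenvalues of P with multiplicity,
   i.e. the roots of the characteristic polynomial, at most one of them
   (the eigenvalue 1, counted once) exceeds lam. *)
Definition second_eigenvalue_le (P : 'M[R]_n) (lam : R) : Prop :=
  forall rs : seq R, char_poly P = \prod_(r <- rs) ('X - r%:P) ->
    (count (fun r : R => (lam < r)%R) rs <= 1)%N.

Definition occupation (P : 'M[R]_n) (gamma : R) (z s : 'I_n) : R :=
  (1 - gamma) * limn (fun N : nat => \sum_(t < N) gamma ^+ t * (P ^+ t) z s).

Definition tv_occupation (P : 'M[R]_n) (gamma : R) (z z' : 'I_n) : R :=
  2^-1 * \sum_s `| occupation P gamma z s - occupation P gamma z' s |.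

End MDP.

(* Main.v *)
Require Import Defs.
From HB Require Import structures.
From mathcomp Require Import all_boot all_order all_algebra.
From mathcomp Require Import all_classical all_reals all_analysis.
From mathcomp Require Import complex.
From mathcomp Require Import ring lra.
Import Order.TTheory GRing.Theory Num.Theory numFieldNormedType.Exports.
Local Open Scope ring_scope.

Lemma CS_sum (R : realFieldType) n (a b : 'I_n -> R) :
  (\sum_i a i * b i) ^+ 2 <= (\sum_i a i ^+ 2) * (\sum_i b i ^+ 2).
Proof.
have H : 0 <= \sum_i \sum_j (a i * b j - a j * b i) ^+ 2.
  by apply: sumr_ge0 => i _; apply: sumr_ge0 => j _; exact: sqr_ge0.
rewrite (eq_bigr (fun i => a i ^+2 * \sum_j b j ^+2 + b i ^+2 * \sum_j a j^+2
   - 2 * (a i * b i) * \sum_j a j * b j)) in H; last first.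
  move=> i _; rewrite !mulr_sumr -big_split -sumrB /=; apply: eq_bigr => j _; ring.
rewrite sumrB big_split -!mulr_suml /= -mulr_sumr in H.
set A := \sum_i _ in H *; set B := \sum_i _ in H *; set C := \sum_i _ in H *.
nra.
Qed.

Lemma stoch_pow (R : realType) n (P : 'M[R]_n) :
  (forall i j, 0 <= P i j) -> (forall i, \sum_j P i j = 1) ->
  forall t, (forall i j, 0 <= (P ^+ t) i j) /\ (forall i, \sum_j (P ^+ t) i j = 1).
Proof.
move=> P0 P1; elim=> [|t [IH0 IH1]].
  split=> [i j|i]; rewrite expr0 ?mxE; first by rewrite ler0n.
  rewrite (bigD1 i) //= mxE eqxx big1 ?addr0 // => j /negbTE ji.
  by rewrite mxE eq_sym ji.
split=> [i j|i]; rewrite exprSr -mulmxE.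
  by rewrite mxE; apply: sumr_ge0 => k _; apply: mulr_ge0.
under eq_bigr do rewrite mxE.
rewrite exchange_big /=.
under eq_bigr do rewrite -mulr_sumr P1 mulr1.
exact: IH1.
Qed.

Lemma cvg_sum_seq (R : realType) (I : Type) (r : seq I) (f : I -> nat -> R) (l : I -> R) :
  (forall i, f i n @[n --> \oo] --> l i)%classic ->
  ((fun N => \sum_(i <- r) f i N) n @[n --> \oo] --> \sum_(i <- r) l i)%classic.
Proof.
move=> H; elim: r => [|a r IH].
  under eq_fun do rewrite big_nil. rewrite big_nil; exact: cvg_cst.
under eq_fun do rewrite big_cons. rewrite big_cons. exact: cvgD.
Qed.

Lemma occupation_lim (R : realType) n (P : 'M[R]_n) (gamma : R) :
  (forall i j, 0 <= P i j) -> (forall i, \sum_j P i j = 1) -> 0 < gamma < 1 ->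
  exists L : 'M[R]_n,
    (forall z s, occupation P gamma z s = (1 - gamma) * L z s) /\
    (forall z s, L z s = (z == s)%:R + gamma * \sum_k L z k * P k s).
Proof.
move=> P0 P1 /andP[g0 g1].
have SP := @stoch_pow R n P P0 P1.
pose u z s N := \sum_(t < N) gamma ^+ t * (P ^+ t) z s.
have geo : forall N, (1 - gamma) * \sum_(t < N) gamma ^+ t = 1 - gamma ^+ N.
  elim=> [|N IH]; first by rewrite big_ord0 expr0 mulr0 subrr.
  by rewrite big_ord_recr /= mulrDr IH exprSr; ring.
have Ple1 : forall t i j, (P ^+ t) i j <= 1.
  move=> t i j; have [h0 h1] := SP t; rewrite -(h1 i) (bigD1 j) //= lerDl.
  by apply: sumr_ge0 => k _.
have cv : forall z s, cvgn (u z s).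
  move=> z s; apply: nondecreasing_is_cvgn.
    apply/nondecreasing_seqP => N; rewrite /u big_ord_recr /= lerDl.
    by apply: mulr_ge0; [apply: exprn_ge0; exact: ltW | exact: (SP N).1].
  exists (1 - gamma)^-1 => _ [N _ <-].
  have hg : 0 < 1 - gamma by rewrite subr_gt0.
  apply: (le_trans (y := \sum_(t < N) gamma ^+ t)).
    by apply: ler_sum => t _; rewrite -[leRHS]mulr1 ler_wpM2l // ?Ple1 // exprn_ge0 // ltW.
  rewrite -(ler_pM2l hg) divff ?gt_eqF // geo lerBlDr lerDl.
  by rewrite exprn_ge0 // ltW.
exists (\matrix_(z, s) limn (u z s)); split.
  by move=> z s; rewrite mxE.
move=> z s; rewrite mxE; under eq_bigr do rewrite mxE.
have rec : forall N, u z s N.+1 = (z == s)%:R + gamma * \sum_k u z k N * P k s.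
  move=> N; rewrite /u big_ord_recl /= expr0 mul1r mxE; congr (_ + _).
  rewrite mulr_sumr.
  under [RHS]eq_bigr do rewrite mulr_suml mulr_sumr.
  rewrite exchange_big /=; apply: eq_bigr => t _.
  rewrite /bump add1n exprS exprSr -mulmxE mxE mulr_sumr; apply: eq_bigr => k _.
  ring.
have h1 : (u z s n.+1 @[n --> \oo] --> limn (u z s))%classic.
  by rewrite (cvg_shiftS (u z s)); exact: (cv z s).
have h2 : (u z s n.+1 @[n --> \oo] -->
            (z == s)%:R + gamma * \sum_k limn (u z k) * P k s)%classic.
  under eq_fun do rewrite rec.
  apply: cvgD; first exact: cvg_cst.
  apply: cvgMr; apply: cvg_sum_seq => k.
  apply: cvgMl; exact: (cv z k).
rewrite -(cvg_lim _ h1) //. apply: (cvg_lim _ h2). exact: norm_hausdorff.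
Qed.

Lemma char_poly_simil (R : comNzRingType) n (W V M : 'M[R]_n) :
  W *m V = 1%:M -> char_poly (W *m M *m V) = char_poly M.
Proof.
move=> WV; rewrite /char_poly.
have -> : char_poly_mx (W *m M *m V) =
   map_mx polyC W *m char_poly_mx M *m map_mx polyC V.
  rewrite /char_poly_mx mulmxBr mulmxBl !map_mxM; congr (_ - _).
  by rewrite mul_mx_scalar -scalemxAl -map_mxM WV map_mx1 scalemx1.
rewrite !det_mulmx !det_map_mx mulrC mulrA -rmorphM.
rewrite -[\det V * _]mulrC -det_mulmx WV det1 rmorph1 mul1r. done.
Qed.

Notation phi R := (real_complex R).

Lemma quad_diag (C : numClosedFieldType) n (U : 'M[C]_n) (e : 'rV[C]_n) (w : 'I_n -> C) :
  U \is unitarymx -> (forall i, Num.conj (w i) = w i) ->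
  \sum_i \sum_j w i * (invmx U *m diag_mx e *m U) i j * w j =
  \sum_k e 0 k * ((\sum_i w i * invmx U i k) * Num.conj (\sum_i w i * invmx U i k)).
Proof.
move=> Uu wr.
have Vent : forall i j, invmx U i j = Num.conj (U j i).
  by move=> i j; rewrite invmx_unitary // !mxE.
have cb : forall k, Num.conj (\sum_i w i * invmx U i k) = \sum_j U k j * w j.
  move=> k; rewrite rmorph_sum; apply: eq_bigr => j _.
  by rewrite rmorphM /= wr Vent conjCK mulrC.
under [RHS]eq_bigr do rewrite cb mulr_suml mulr_sumr.
have Ment : forall i j, (invmx U *m diag_mx e *m U) i j =
    \sum_k invmx U i k * e 0 k * U k j.
  by move=> i j; rewrite mxE; apply: eq_bigr => k _; rewrite mul_mx_diag mxE.
transitivity (\sum_i \sum_j \sum_k w i * (invmx U i k * e 0 k * U k j) * w j).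
  apply: eq_bigr => i _; apply: eq_bigr => j _.
  by rewrite Ment mulr_sumr mulr_suml.
rewrite [LHS](eq_bigr (fun i => \sum_k \sum_j w i * (invmx U i k * e 0 k * U k j) * w j)); last first.
  by move=> i _; rewrite exchange_big.
rewrite [LHS]exchange_big /=; apply: eq_bigr => k _.
apply: eq_bigr => i _.
rewrite mulr_sumr mulr_sumr; apply: eq_bigr => j _.
ring.
Qed.

Lemma count_two (T : finType) (p : pred T) (a b : T) :
  a != b -> p a -> p b -> (1 < count p (index_enum T))%N.
Proof.
move=> ab pa pb.
have H1 : forall x, count (pred1 x) (index_enum T) = 1%N.
  by move=> x; rewrite count_uniq_mem ?index_enum_uniq // mem_index_enum.
have := count_predUI (pred1 a) (pred1 b) (index_enum T).
rewrite !H1 (@eq_count _ (predI _ _) pred0); last first.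
  by move=> x /=; apply/negP => /andP[/eqP-> /eqP e]; rewrite e eqxx in ab.
rewrite count_pred0 addn0 => E.
apply: (@leq_trans (count (predU (pred1 a) (pred1 b)) (index_enum T))).
  by rewrite E.
by apply: sub_count => x /orP[] /eqP ->.
Qed.

Lemma rayleigh (R : realType) n (S : 'M[R]_n) (u y : 'I_n -> R) (lam : R) :
  (forall i j, S i j = S j i) ->
  (forall j, \sum_i u i * S i j = u j) ->
  (exists i, u i != 0) -> lam < 1 ->
  (forall rs : seq R, char_poly S = \prod_(r <- rs) ('X - r%:P) ->
     (count (fun r : R => (lam < r)%R) rs <= 1)%N) ->
  \sum_i y i * u i = 0 ->
  \sum_i \sum_j y i * S i j * y j <= lam * \sum_i y i ^+ 2.
Proof.
move=> Ssym uS [i0 ui0] lam1 Hc yu.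
pose A := map_mx (phi R) S.
have cj : forall x : R, Num.conj (phi R x) = phi R x by move=> x; exact: conjc_real.
have Aherm : A \is hermsymmx.
  apply/is_hermitianmxP; rewrite expr0 scale1r; apply/matrixP => i j.
  by rewrite !mxE cj Ssym.
have Anorm := hermitian_normalmx Aherm.
have HA : A = invmx (spectralmx A) *m diag_mx (spectral_diag A) *m spectralmx A.
  exact/orthomx_spectralP.
set U := spectralmx A in HA; set d := spectral_diag A in HA.
have Uu : U \is unitarymx := spectral_unitarymx A.
have Uunit := unitarymx_unit Uu.
have dreal : forall k, phi R (complex.Re (d 0 k)) = d 0 k.
  move=> k; apply: RRe_real.
  by have /mxOverP := hermitian_spectral_diag_real Aherm; apply.
pose dr k := complex.Re (d 0 k).
have Hch : char_poly S = \prod_(k < n) ('X - (dr k)%:P).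
  apply: (@map_poly_inj _ _ (phi R)).
  rewrite map_char_poly -/A HA char_poly_simil ?mulVmx //.
  rewrite char_poly_trig ?diag_mx_is_trig // rmorph_prod; apply: eq_bigr => k _.
  by rewrite rmorphB /= map_polyX map_polyC /= dreal mxE eqxx mulr1n.
have Hcnt : (count (fun k : 'I_n => (lam < dr k)%R) (index_enum 'I_n) <= 1)%N.
  rewrite -(count_map dr (fun r : R => (lam < r)%R)); apply: Hc.
  by rewrite Hch big_map.
have uniqk : forall k1 k2, lam < dr k1 -> lam < dr k2 -> k1 = k2.
  move=> k1 k2 h1 h2; apply/eqP; apply/negPn/negP => k12.
  by have := @count_two _ (fun k : 'I_n => (lam < dr k)%R) _ _ k12 h1 h2; rewrite ltnNge Hcnt.
pose uc := \row_i phi R (u i).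
have ucA : uc *m A = uc.
  apply/rowP => j; rewrite !mxE -uS rmorph_sum; apply: eq_bigr => i _.
  by rewrite !mxE rmorphM.
pose c := uc *m invmx U.
have AV : A *m invmx U = invmx U *m diag_mx d by rewrite {1}HA mulmxK.
have cD : c *m diag_mx d = c by rewrite /c -mulmxA -AV mulmxA ucA.
have cent : forall k, c 0 k * d 0 k = c 0 k.
  by move=> k; have /rowP/(_ k) := cD; rewrite mul_mx_diag mxE.
have ucU : uc = c *m U by rewrite /c mulmxKV.
have [j cj0] : exists j, c 0 j != 0.
  case: (boolP [exists j, c 0 j != 0]) => [/existsP [k hk]|/existsPn H]; first by exists k.
  have c0 : c = 0 by apply/rowP => k; move: (H k); rewrite negbK => /eqP ->; rewrite mxE.
  have /rowP/(_ i0) := ucU; rewrite c0 mul0mx !mxE => /eqP.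
  by rewrite fmorph_eq0 (negPf ui0).
have d1 : forall k, c 0 k != 0 -> lam < dr k.
  move=> k ck; have := cent k; rewrite -[X in _ = X]mulr1 => /(mulfI ck) dk.
  by rewrite /dr dk.
have c0 : forall k, k != j -> c 0 k = 0.
  move=> k kj; apply/eqP; apply: contraNT kj => ck; apply/eqP.
  exact: uniqk (d1 _ ck) (d1 _ cj0).
clearbody c.
pose w i := phi R (y i).
have wr : forall i, Num.conj (w i) = w i by move=> i; exact: cj.
pose b k := \sum_i w i * invmx U i k.
have Vent : forall i k, invmx U i k = Num.conj (U k i).
  by move=> i k; rewrite invmx_unitary // !mxE.
have uci : forall i, phi R (u i) = c 0 j * U j i.
  move=> i; have /rowP/(_ i) := ucU; rewrite !mxE => ->.
  rewrite (bigD1 j) //= big1 ?addr0 // => k kj; by rewrite c0 ?mul0r.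
have bj : b j = 0.
  have : phi R (\sum_i y i * u i) = Num.conj (c 0 j) * b j.
    rewrite rmorph_sum /b mulr_sumr; apply: eq_bigr => i _.
    rewrite rmorphM /= -[phi R (u i)]cj uci rmorphM /= Vent /w; ring.
  rewrite yu rmorph0 => /esym/eqP; rewrite mulf_eq0 conjC_eq0 (negPf cj0) /=.
  by move/eqP.
have L1 : phi R (\sum_i \sum_j y i * S i j * y j) =
    \sum_k d 0 k * (b k * Num.conj (b k)).
  rewrite -(@quad_diag _ _ _ d _ Uu wr) -HA.
  rewrite rmorph_sum; apply: eq_bigr => i _; rewrite rmorph_sum; apply: eq_bigr => k _.
  by rewrite !rmorphM /A mxE.
have L2 : phi R (\sum_i y i ^+ 2) = \sum_k 1 * (b k * Num.conj (b k)).
  transitivity (\sum_k (const_mx 1 : 'rV[R[i]]_n) 0 k * (b k * Num.conj (b k))); last first.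
    by apply: eq_bigr => k _; rewrite mxE.
  rewrite -(@quad_diag _ _ _ _ _ Uu wr) diag_const_mx mulmx1 mulVmx //.
  rewrite rmorph_sum; apply: eq_bigr => i _; rewrite (bigD1 i) //= big1 ?addr0.
    by rewrite mxE eqxx mulr1 expr2 rmorphM.
  by move=> k ki; rewrite mxE eq_sym (negPf ki) mulr0 mul0r.
rewrite -lecR L1 rmorphM /= L2 mulr_sumr; apply: ler_sum => k _.
rewrite mul1r; case: (ltrP lam (dr k)) => h.
  by rewrite (uniqk _ _ h (d1 _ cj0)) bj mul0r !mulr0.
by rewrite -dreal ler_wpM2r ?mulcJ_ge0 // lecR.
Qed.

Lemma sum_delta (R : realType) n (z : 'I_n) : \sum_s ((z == s)%:R : R) = 1.
Proof.
rewrite (bigD1 z) //= eqxx big1 ?addr0 // => s sz.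
by rewrite eq_sym (negPf sz).
Qed.

Theorem proposition3 (R : realType) (n m : nat)
    (K : 'I_m -> 'M[R]_n)
    (allowed : 'M[R]_(n, m) -> Prop)
    (pst : 'M[R]_(n, m) -> 'rV[R]_n)
    (pmin lam eps gamma : R) :
  mdp_kernel K ->
  (forall pi, allowed pi -> stochastic_mx pi) ->
  (forall pi, allowed pi -> ergodic_mx (induced_chain K pi)) ->
  (forall pi, allowed pi -> stationary_distr (induced_chain K pi) (pst pi)) ->
  (forall pi, allowed pi -> reversible_wrt (induced_chain K pi) (pst pi)) ->
  (* pmin = min_{s, pi} p_pi(s) *)
  (forall pi s, allowed pi -> pmin <= pst pi 0 s) ->
  (exists pi s, allowed pi /\ pst pi 0 s = pmin) ->
  lam < 1 ->
  (forall pi, allowed pi -> second_eigenvalue_le (induced_chain K pi) lam) ->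
  0 < eps -> 0 < gamma < 1 ->
  (1 - pmin * eps) / (1 - lam * pmin * eps) <= gamma ->
  forall pi, allowed pi -> forall z z' : 'I_n,
    tv_occupation (induced_chain K pi) gamma z z' <= eps.
Proof.
move=> hK hpi _ hst hrev hpmin [pi0 [s0 [hpi0 hs0]]] lam1 hlam eps0 hg hcond pi api z z'.
have /andP[g0 g1] := hg.
have [p0 [p1 pP]] := hst pi api.
have rev := hrev pi api.
have hsl := hlam pi api.
set P := induced_chain K pi in p0 p1 pP rev hsl *.
set p := pst pi in p0 p1 pP rev hsl *.
have P0 : forall i j, 0 <= P i j.
  move=> i j; rewrite mxE; apply: sumr_ge0 => a _; apply: mulr_ge0.
    exact: (hpi pi api).1.
  exact: (hK a).1.
have P1 : forall i, \sum_j P i j = 1.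
  move=> i; under eq_bigr do rewrite mxE.
  rewrite exchange_big /=; under eq_bigr do rewrite -mulr_sumr (hK _).2 mulr1.
  exact: (hpi pi api).2.
clearbody P.
have pminle : forall s, pmin <= p 0 s by move=> s; exact: hpmin.
have pmin0 : 0 < pmin.
  have h0 : 0 <= pmin by rewrite -hs0; exact: (hst pi0 hpi0).1.
  rewrite lt_neqAle h0 andbT; apply/eqP => e.
  by move: hcond; rewrite -e !(mul0r, mulr0) !subr0 divr1 leNgt g1.
have pmin1 : pmin <= 1.
  apply: (le_trans (pminle z)); rewrite -p1 (bigD1 z) //= lerDl.
  by apply: sumr_ge0 => s _.
have [L [hocc hL]] := @occupation_lim R n P gamma P0 P1 hg.
pose D s := L z s - L z' s.
pose f s : R := (z == s)%:R - (z' == s)%:R.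
have hD : forall s, D s = f s + gamma * \sum_k D k * P k s.
  move=> s; rewrite /D /f (hL z s) (hL z' s).
  under [X in _ = _ + gamma * X]eq_bigr do rewrite mulrBl.
  rewrite sumrB; ring.
have sumD : \sum_s D s = 0.
  have : \sum_s D s = gamma * \sum_s D s.
    under [LHS]eq_bigr do rewrite hD.
    rewrite big_split /= /f sumrB !sum_delta subrr add0r -mulr_sumr.
    congr (_ * _); rewrite exchange_big /=; apply: eq_bigr => k _.
    by rewrite -mulr_sumr P1 mulr1.
  move/eqP; rewrite -subr_eq0 -[X in X - _]mul1r -mulrBl mulf_eq0 subr_eq0.
  by rewrite eq_sym (lt_eqF g1) /= => /eqP.
have tvE : tv_occupation P gamma z z' = 2^-1 * ((1 - gamma) * \sum_s `|D s|).
  rewrite /tv_occupation; congr (_ * _); rewrite mulr_sumr; apply: eq_bigr => s _.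
  by rewrite !hocc -mulrBr normrM ger0_norm // subr_ge0 ltW.
pose q s := Num.sqrt (p 0 s).
have q0 : forall s, 0 < q s by move=> s; rewrite sqrtr_gt0 (lt_le_trans pmin0).
have q2 : forall s, q s ^+ 2 = p 0 s by move=> s; rewrite sqr_sqrtr.
have qn0 : forall s, q s != 0 by move=> s; rewrite gt_eqF.
pose S := \matrix_(i, j) (q i * P i j / q j).
have Ssym : forall i j, S i j = S j i.
  move=> i j; rewrite !mxE.
  have E1 : q i * P i j / q j = (q i ^+ 2 * P i j) / (q i * q j).
    by field; rewrite !qn0.
  have E2 : q j * P j i / q i = (q j ^+ 2 * P j i) / (q i * q j).
    by field; rewrite !qn0.
  by rewrite E1 E2 !q2 rev.
have uS : forall j, \sum_i q i * S i j = q j.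
  move=> j.
  transitivity ((\sum_i p 0 i * P i j) / q j).
    rewrite mulr_suml; apply: eq_bigr => i _; rewrite mxE -q2; field; exact: qn0.
  have -> : \sum_i p 0 i * P i j = p 0 j by have /rowP/(_ j) := pP; rewrite mxE.
  by rewrite -q2; field; exact: qn0.
pose Q := diag_mx (\row_i q i).
pose Qi := diag_mx (\row_i (q i)^-1).
have QiQ : Qi *m Q = 1%:M.
  apply/matrixP => i j; rewrite mul_diag_mx !mxE.
  have [->|ij] := eqVneq i j; first by rewrite mulr1n mulVf.
  by rewrite mulr0n mulr0.
have PS : P = Qi *m S *m Q.
  apply/matrixP => i j; rewrite mul_mx_diag mxE mul_diag_mx !mxE.
  by field; rewrite !qn0.
have hS : forall rs : seq R, char_poly S = \prod_(r <- rs) ('X - r%:P) ->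
     (count (fun r : R => (lam < r)%R) rs <= 1)%N.
  by move=> rs; rewrite -(@char_poly_simil _ _ _ _ S QiQ) -PS; exact: hsl.
pose g s := D s / q s.
pose x s := f s / q s.
have rel : forall s, g s - gamma * \sum_k g k * S k s = x s.
  move=> s.
  have -> : \sum_k g k * S k s = (\sum_k D k * P k s) / q s.
    rewrite mulr_suml; apply: eq_bigr => k _; rewrite mxE /g; by field; rewrite !qn0.
  by rewrite /g /x (hD s); field; exact: qn0.
have gq : \sum_i g i * q i = 0.
  rewrite -[RHS]sumD; apply: eq_bigr => i _; rewrite /g; field; exact: qn0.
have RL := @rayleigh R n S q g lam Ssym uS (ex_intro _ z (qn0 z)) lam1 hS gq.
have Id : \sum_j x j * g j = \sum_i g i ^+ 2 - gamma * \sum_i \sum_j g i * S i j * g j.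
  under eq_bigr do rewrite -rel.
  rewrite exchange_big /= mulr_sumr -sumrB; apply: eq_bigr => j _.
  by rewrite mulrBl expr2 -[gamma * _ * g j]mulrA mulr_suml.
have CS1 := @CS_sum R n x g.
have CS2 := @CS_sum R n q (fun s => `|g s|).
have sq1 : \sum_i q i ^+ 2 = 1 by rewrite -p1; apply: eq_bigr => i _; exact: q2.
have sqg : \sum_i `|g i| ^+ 2 = \sum_i g i ^+ 2.
  by apply: eq_bigr => i _; rewrite real_normK // num_real.
have TE : \sum_s `|D s| = \sum_i q i * `|g i|.
  apply: eq_bigr => i _; rewrite /g normrM normfV (gtr0_norm (q0 i)).
  by field; exact: qn0.
have Xb : pmin * \sum_i x i ^+ 2 <= 4.
  apply: (@le_trans _ _ (\sum_i f i ^+ 2)).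
    rewrite mulr_sumr; apply: ler_sum => i _.
    have -> : x i ^+ 2 = f i ^+ 2 / p 0 i by rewrite /x -q2; field; exact: qn0.
    have pi0' : 0 < p 0 i by exact: (lt_le_trans pmin0).
    by rewrite mulrA ler_pdivrMr // mulrC ler_wpM2l ?sqr_ge0.
  apply: (@le_trans _ _ (\sum_i (2 * (z == i)%:R + 2 * (z' == i)%:R))).
    apply: ler_sum => i _; rewrite /f.
    by case: (z == i); case: (z' == i); rewrite /= ?mulr1n ?mulr0n; lra.
  by rewrite big_split /= -!mulr_sumr !sum_delta; lra.
rewrite tvE.
set G := \sum_i g i ^+ 2 in RL Id CS1 sqg.
set Qf := \sum_i \sum_j g i * S i j * g j in RL Id.
set XG := \sum_j x j * g j in Id CS1.
set X := \sum_i x i ^+ 2 in CS1 Xb.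
set T := \sum_s `|D s|.
rewrite -TE sq1 sqg mul1r in CS2.
have T0 : 0 <= T by apply: sumr_ge0 => s _.
have G0 : 0 <= G by apply: sumr_ge0 => s _; exact: sqr_ge0.
have X0 : 0 <= X by apply: sumr_ge0 => s _; exact: sqr_ge0.
set a := 1 - gamma * lam.
have a0 : 0 < a by rewrite /a; nra.
have h1 : a * G <= XG.
  rewrite Id /a; have : gamma * Qf <= gamma * (lam * G) by rewrite ler_wpM2l // ltW.
  lra.
have h2 : a ^+ 2 * G <= X.
  have [G00|Gp] := eqVneq G 0; first by rewrite G00 mulr0.
  have Gp' : 0 < G by rewrite lt_neqAle eq_sym Gp G0.
  have h3 : (a * G) ^+ 2 <= X * G.
    apply: le_trans CS1; rewrite ler_sqr ?nnegrE //; first by rewrite mulr_ge0 // ltW.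
    by apply: le_trans h1; rewrite mulr_ge0 // ltW.
  by rewrite -(ler_pM2r Gp') -mulrA -expr2 -exprMn.
set W := (1 - gamma) * T.
have W0 : 0 <= W by rewrite mulr_ge0 // subr_ge0 ltW.
have h4 : W ^+ 2 * a ^+ 2 <= (1 - gamma) ^+ 2 * X.
  have hg2 : 0 <= (1 - gamma) ^+ 2 by exact: sqr_ge0.
  rewrite /W exprMn -mulrA; apply: ler_wpM2l => //.
  apply: le_trans (_ : G * a ^+ 2 <= _); first by rewrite ler_wpM2r ?sqr_ge0.
  by rewrite mulrC.
have h5 : W ^+ 2 <= 4 * eps ^+ 2.
  have pa : 0 < pmin * a ^+ 2 by rewrite mulr_gt0 // exprn_gt0.
  have [den|den] := ltrP 0 (1 - lam * pmin * eps).
    move: hcond; rewrite ler_pdivrMr // => hc.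
    have hc' : 1 - gamma <= pmin * eps * a by rewrite /a; nra.
    have hc2 : (1 - gamma) ^+ 2 <= (pmin * eps * a) ^+ 2.
      have hg0 : 0 <= 1 - gamma by rewrite subr_ge0 ltW.
      by move: (pmin * eps * a) hc' => t ht; nra.
    have s1 : pmin * (W ^+ 2 * a ^+ 2) <= (1 - gamma) ^+ 2 * (pmin * X).
      by rewrite [X in _ <= X]mulrCA ler_wpM2l // ltW.
    have s2 : (1 - gamma) ^+ 2 * (pmin * X) <= (1 - gamma) ^+ 2 * 4.
      by rewrite ler_wpM2l // sqr_ge0.
    have s3 : (1 - gamma) ^+ 2 * 4 <= (pmin * eps * a) ^+ 2 * 4 by rewrite ler_wpM2r.
    have E1 : (pmin * eps * a) ^+ 2 * 4 = (pmin * a ^+ 2) * (pmin * eps ^+ 2 * 4) by ring.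
    have E2 : pmin * (W ^+ 2 * a ^+ 2) = (pmin * a ^+ 2) * W ^+ 2 by ring.
    have s4 : W ^+ 2 <= pmin * eps ^+ 2 * 4.
      by rewrite -(ler_pM2l pa) -E1 -E2 (le_trans s1 (le_trans s2 s3)).
    have e2 : 0 <= eps ^+ 2 by exact: sqr_ge0.
    move: (W ^+ 2) (eps ^+ 2) s4 e2 => w2 e2' s4 e2; nra.
  have pe : 1 < pmin * eps.
    have hp : 0 < pmin * eps by rewrite mulr_gt0.
    move: den; rewrite -mulrA; move: (pmin * eps) hp => t ht; nra.
  have ga : 1 - gamma <= a by rewrite /a; nra.
  have hg0 : 0 <= 1 - gamma by rewrite subr_ge0 ltW.
  have hga : (1 - gamma) ^+ 2 <= a ^+ 2 by nra.
  have e1 : 1 < eps by nra.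
  have h6 : W ^+ 2 * a ^+ 2 <= a ^+ 2 * X by apply: le_trans h4 _; rewrite ler_wpM2r.
  have h7 : W ^+ 2 <= X by move: h6; rewrite mulrC ler_pM2l // exprn_gt0.
  have h8 : pmin * W ^+ 2 <= 4 by apply: (le_trans _ Xb); rewrite ler_wpM2l // ltW.
  have h9 : 1 < pmin * eps ^+ 2 by rewrite expr2 mulrA; nra.
  move: (W ^+ 2) (eps ^+ 2) h8 h9 => w2 e2 h8 h9.
  nra.
have : W <= 2 * eps.
  move: h5; rewrite !expr2 => h5; nra.
lra.
Qed.
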